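(* For every integer $k\ge 2$, the complete multipartite graph $K_{1,2*(k-1),k-1}$ (with one part of size $1$, $k-1$ parts of size $2$, and one further part of size $k-1$) has m-number $k+1$.
   Context: All graphs are finite, simple and undirected. A list assignment $L$ for a graph $G$ assigns to each vertex $v$ a set $L(v)$ of colors; an $L$-coloring is a proper vertex coloring $c$ of $G$ with $c(v)\in L(v)$ for every vertex $v$. A $k$-list assignment is a list assignment with $|L(v)|=k$ for all $v$. $G$ is uniquely $k$-list colorable (U$k$LC) if there exists a $k$-list assignment $L$ such that $G$ has exactly one $L$-coloring. $G$ has property $M(k)$ if it is not U$k$LC, i.e. for every $k$-list assignment $L$, $G$ has either no $L$-coloring or at least two $L$-colorings. The m-number $m(G)$ is the least integer $k\ge 1$ such that $G$ has property $M(k)$. (Every U$k$LC graph is also U$(k-1)$LC, so $G$ is U$k$LC iff $k<m(G)$.) *)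

(* Defs.v *)
From mathcomp Require Import all_boot.
Set Implicit Arguments. Unset Strict Implicit. Unset Printing Implicit Defensive.

(* Part sizes s = [:: s_0; s_1; ...]; vertex set 'I_(sumn s); vertices
   0 .. s_0-1 form part 0, the next s_1 vertices part 1, etc. *)
Definition part_bounds (s : seq nat) : seq nat :=
  [seq sumn (take j.+1 s) | j <- iota 0 (size s)].

Definition part_of (s : seq nat) (i : nat) : nat :=
  count (fun m => m <= i) (part_bounds s).

Definition cm_adj (s : seq nat) : rel 'I_(sumn s) :=
  fun u v => part_of s u != part_of s v.

Arguments cm_adj s u v : clear implicits.

Definition K_sizes (k : nat) : seq nat := 1 :: nseq (k - 1) 2 ++ [:: k - 1].

(* Colours are natural numbers (any finite lists can be relabelled). *)
Definition k_list_assignment (T : finType) (k : nat) (L : T -> seq nat) :=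
  forall v, uniq (L v) /\ size (L v) = k.

Definition L_coloring (T : finType) (adj : rel T) (L : T -> seq nat)
    (c : T -> nat) :=
  (forall v, c v \in L v) /\ (forall u v, adj u v -> c u != c v).

Definition UkLC (T : finType) (adj : rel T) (k : nat) :=
  exists L, k_list_assignment k L /\
    exists c, L_coloring adj L c /\
      forall c', L_coloring adj L c' -> c' =1 c.

Definition property_M (T : finType) (adj : rel T) (k : nat) := ~ UkLC adj k.

Definition m_number_is (T : finType) (adj : rel T) (m : nat) :=
  1 <= m /\ property_M adj m /\
  forall j, 1 <= j -> j < m -> ~ property_M adj j.

(* Main.v *)
Require Import Defs.
From mathcomp Require Import all_boot zify.
Set Implicit Arguments. Unset Strict Implicit. Unset Printing Implicit Defensive.


Lemma sumn_nseq2 j : sumn (nseq j 2) = j.*2.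
Proof. by elim: j => //= j ->; rewrite doubleS. Qed.

Lemma size_K k : 1 <= k -> size (K_sizes k) = k.+1.
Proof. move=> hk; rewrite /K_sizes /= size_cat size_nseq /=; lia. Qed.

Lemma sumn_K k : 1 <= k -> sumn (K_sizes k) = 3 * k - 2.
Proof. move=> hk; rewrite /K_sizes /= sumn_cat sumn_nseq2 /=; lia. Qed.

Lemma pb_K k : 1 <= k ->
  part_bounds (K_sizes k) = [seq j.*2.+1 | j <- iota 0 k] ++ [:: 3 * k - 2].
Proof.
move=> hk; rewrite /part_bounds size_K // -addn1 iotaD map_cat /=.
congr (_ ++ _); last first.
  rewrite take_oversize /=.
    by rewrite sumn_cat sumn_nseq2 /=; congr [:: _]; lia.
  by rewrite size_cat size_nseq /=; lia.
apply/eq_in_map => j; rewrite mem_iota add0n => /andP[_ hj] /=.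
rewrite take_cat size_nseq.
case: ifP => hj2.
  by rewrite take_nseq ?sumn_nseq2 //; lia.
have -> : j = k - 1 by lia.
by rewrite subnn take0 cats0 sumn_nseq2.
Qed.

Lemma count_odd_le k v :
  count (fun j => j.*2.+1 <= v) (iota 0 k) = minn k (v.+1 %/ 2).
Proof.
elim: k => [|k IH]; first by rewrite /= min0n.
rewrite -addn1 iotaD count_cat IH /= add0n addn0.
rewrite -muln2; case: ltnP => h /=; lia.
Qed.

Lemma part_of_K k (v : nat) : 1 <= k -> v < 3 * k - 2 ->
  part_of (K_sizes k) v = minn k (v.+1 %/ 2).
Proof.
move=> hk hv; rewrite /part_of pb_K // count_cat count_map.
have -> : count (preim (fun j : nat => j.*2.+1) (fun m : nat => m <= v)) (iota 0 k)
   = count (fun j => j.*2.+1 <= v) (iota 0 k) by [].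
rewrite count_odd_le /=.
have -> : (3 * k - 2 <= v) = false by apply/negbTE; rewrite -ltnNge.
by rewrite /= !addn0.
Qed.

Lemma UkLC_down (T : finType) (adj : rel T) k : 1 <= k -> UkLC adj k.+1 -> UkLC adj k.
Proof.
move=> hk [L [hL [c [[hcL hcp] hu]]]].
pose L' v := take k (c v :: rem (c v) (L v)).
exists L'; split.
  move=> v; have [hu1 hs1] := hL v; split.
    rewrite take_uniq //= rem_uniq // andbT mem_rem_uniqF //.
  by rewrite size_take /= size_rem ?hcL // hs1 /= ltnSn.
have sub : forall v x, x \in L' v -> x \in L v.
  move=> v x /mem_take; rewrite inE => /orP[/eqP -> //|]; exact: mem_rem.
exists c; split.
  split=> // v; rewrite /L'; have -> : k = k.-1.+1 by lia. exact: mem_head.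
move=> c' [h1 h2]; apply: hu; split=> // v; exact: sub (h1 v).
Qed.

Lemma UkLC_downto (T : finType) (adj : rel T) k j :
  1 <= j -> j <= k -> UkLC adj k -> UkLC adj j.
Proof.
move=> hj; elim: k => [|k IH]; first by rewrite leqn0 => /eqP ->; case: j hj.
rewrite leq_eqVlt => /orP[/eqP -> //|hjk] hU.
apply: IH => //; apply: UkLC_down => //; lia.
Qed.

Lemma pig (k t : nat) (s : seq nat) : uniq s -> size s = k ->
  (forall x, x \in s -> x < k) -> t < k -> t \notin s -> False.
Proof.
move=> us hs hall ht hts.
have sub : {subset s <= rem t (iota 0 k)}.
  move=> x hx; rewrite mem_rem_uniq ?iota_uniq // inE mem_iota add0n hall // leq0n !andbT.
  by apply/eqP => ext; rewrite -ext hx in hts.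
have := uniq_leq_size us sub; rewrite size_rem ?mem_iota // size_iota hs; lia.
Qed.

Lemma imp_false (P : bool) : P -> (P -> ~~ true) -> False.
Proof. by move=> p /(_ p). Qed.

Definition Lc k (v : nat) : seq nat :=
  if v < 2 * k - 1 then
    (if (v == 0) || odd v then iota 0 k else (v.+1 %/ 2) :: iota k (k-1))
  else (v - k + 1) :: iota 1 (k-1).

Definition c0 k (v : nat) : nat := if v < 2 * k - 1 then v.+1 %/ 2 else v - k + 1.

Lemma K_UkLC k : 2 <= k -> UkLC (cm_adj (K_sizes k)) k.
Proof.
move=> hk.
have hn : sumn (K_sizes k) = 3 * k - 2 by apply: sumn_K; lia.
have hp : forall v : 'I_(sumn (K_sizes k)),
    part_of (K_sizes k) v = minn k (v.+1 %/ 2).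
  by move=> v; apply: part_of_K; [lia | rewrite -hn].
exists (fun v : 'I_(sumn (K_sizes k)) => Lc k v); split.
  move=> v; rewrite /Lc; move: (nat_of_ord v) => x; case: ifP => hv.
    case: ifP => _; first by rewrite iota_uniq size_iota.
    rewrite /= iota_uniq size_iota mem_iota andbT; split; clear hp; lia.
  rewrite /= iota_uniq size_iota mem_iota andbT; split; clear hp; lia.
exists (fun v : 'I_(sumn (K_sizes k)) => c0 k v); split.
  split.
    move=> v; rewrite /Lc /c0; move: (nat_of_ord v) => x; case: ifP => hv.
      case: ifP => _; last by rewrite mem_head.
      rewrite mem_iota; clear hp; lia.
    by rewrite mem_head.
  move=> u v; rewrite /cm_adj !hp /c0 => huv.
  have hu : (u : nat) < 3 * k - 2 by rewrite -hn.
  have hv : (v : nat) < 3 * k - 2 by rewrite -hn.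
  move: (nat_of_ord u) (nat_of_ord v) hu hv huv => x y hu hv huv.
  clear hp; case: ifP => h1; case: ifP => h2; apply/eqP; lia.
move=> c' [hL hP].
have hadj : forall u v : 'I_(sumn (K_sizes k)),
    minn k (u.+1 %/ 2) != minn k (v.+1 %/ 2) -> c' u != c' v.
  by move=> u v h; apply: hP; rewrite /cm_adj !hp.
clear hp.
have v0 : 'I_(sumn (K_sizes k)) by exists 0; rewrite hn; lia.
pose mk (i : nat) : 'I_(sumn (K_sizes k)) := insubd v0 i.
have hmk : forall i, i < 3 * k - 2 -> val (mk i) = i.
  move=> i hi; have hi' : i < sumn (K_sizes k) by rewrite hn.
  by rewrite val_insubd hi'.
have hL' : forall i, i < 3 * k - 2 -> c' (mk i) \in Lc k i.
  by move=> i hi; rewrite -{2}(hmk i hi); apply: hL.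
have hadj' : forall i j, i < 3 * k - 2 -> j < 3 * k - 2 ->
    minn k (i.+1 %/ 2) != minn k (j.+1 %/ 2) -> c' (mk i) != c' (mk j).
  by move=> i j hi hj h; apply: hadj; rewrite !hmk.
pose xo (j : nat) := if j == 0 then 0 else j.*2 - 1.
have hxo : forall j, j < k -> xo j < 3 * k - 2 /\ minn k ((xo j).+1 %/ 2) = j
    /\ (xo j == 0) || odd (xo j) /\ xo j < 2 * k - 1.
  move=> j hj; rewrite /xo; case: eqP => [->|hj0] /=; first by split; lia.
  have -> : j.*2 - 1 = (j.-1).*2.+1 by lia.
  rewrite /= odd_double /=; split; [lia|split; [|split]; lia].
pose s := [seq c' (mk (xo j)) | j <- iota 0 k].
have us : uniq s.
  rewrite map_inj_in_uniq ?iota_uniq // => i j; rewrite !mem_iota !add0n => hi hj.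
  have [a1 [b1 _]] := hxo i hi; have [a2 [b2 _]] := hxo j hj.
  move=> e; apply/eqP; case: eqP => // /eqP hij.
  by move: (hadj' _ _ a1 a2); rewrite b1 b2 hij e eqxx => /(_ isT).
have hsz : size s = k by rewrite size_map size_iota.
have hslt : forall x, x \in s -> x < k.
  move=> x /mapP[j]; rewrite mem_iota add0n => hj ->.
  have [a1 [_ [c1 d1]]] := hxo j hj.
  by move: (hL' _ a1); rewrite /Lc d1 c1 mem_iota add0n.
have step1 : forall i, 2 * k - 1 <= i < 3 * k - 2 -> c' (mk i) = i - k + 1.
  move=> i /andP[h1 h2]; move: (hL' _ h2); rewrite /Lc ifF; last by apply/negbTE; rewrite -leqNgt.
  rewrite in_cons => /orP[/eqP // | ]; rewrite mem_iota => ht; exfalso.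
  apply: (pig us hsz hslt (t := c' (mk i))); first by lia.
  apply/mapP => [[j]]; rewrite mem_iota add0n => hj e.
  have [a1 [b1 _]] := hxo j hj.
  have := hadj' _ _ h2 a1; rewrite b1 e eqxx; apply: imp_false; apply/eqP; lia.
have step2 : forall i, 0 < i < 2 * k - 1 -> ~~ odd i -> c' (mk i) = i.+1 %/ 2.
  move=> i /andP[h0 h1] hodd; have h2 : i < 3 * k - 2 by lia.
  move: (hL' _ h2); rewrite /Lc h1 ifF; last by apply/negbTE; rewrite negb_or hodd andbT -lt0n.
  rewrite in_cons => /orP[/eqP // | ]; rewrite mem_iota => ht; exfalso.
  have hw : 2 * k - 1 <= c' (mk i) + k - 1 < 3 * k - 2 by lia.
  have := step1 _ hw; have := hadj' _ _ h2 (proj2 (andP hw)).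
  have -> : c' (mk i) + k - 1 - k + 1 = c' (mk i) by lia.
  move=> H E; move: H; rewrite E eqxx; apply: imp_false; apply/eqP; lia.
have step3 : forall i, i < 2 * k - 1 -> odd i -> c' (mk i) = i.+1 %/ 2.
  move=> i h1 hodd; have h2 : i < 3 * k - 2 by lia.
  have hq : 0 < i.+1 < 2 * k - 1.
    apply/andP; split => //; apply: contraTT hodd => hh.
    have -> : i = 2 * k - 2 by lia.
    have -> : 2 * k - 2 = (k - 1).*2 by lia.
    by rewrite odd_double.
  have E2 := step2 _ hq; rewrite /= hodd in E2; have := E2 isT; clear E2 => E2.
  apply/eqP; apply/negPn/negP => hne; exfalso.
  apply: (pig us hsz hslt (t := i.+2 %/ 2)); first by lia.
  apply/mapP => [[j]]; rewrite mem_iota add0n => hj e.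
  have [a1 [b1 _]] := hxo j hj.
  have h3 : i.+1 < 3 * k - 2 by lia.
  have hq2 : i.+2 %/ 2 = i.+1 %/ 2.
    by move: (odd_double_half i); rewrite hodd -divn2 -muln2 => ?; lia.
  case: (eqVneq (xo j) i) => hx.
    by move: hne; rewrite -hq2 e hx eqxx.
  have := hadj' _ _ a1 h3; rewrite b1 -e E2 eqxx; apply: imp_false.
  apply: contra hx => /eqP hj'; apply/eqP; move: hj'.
  rewrite /xo; move: (odd_double_half i); rewrite hodd -divn2 -muln2.
  case: eqP => [->|]; lia.
have step4 : c' (mk 0) = 0.
  have h0 : 0 < 3 * k - 2 by lia.
  move: (hL' _ h0); rewrite /Lc; have -> : 0 < 2 * k - 1 by lia.
  rewrite /= mem_iota add0n => ht.
  apply/eqP; apply/negPn/negP => hne; exfalso.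
  have hi : (c' (mk 0)).*2.-1 < 2 * k - 1 by lia.
  have ho : odd (c' (mk 0)).*2.-1 by rewrite -subn1 oddB ?odd_double //; lia.
  have := step3 _ hi ho; have h4 : (c' (mk 0)).*2.-1 < 3 * k - 2 by lia.
  have -> : ((c' (mk 0)).*2.-1).+1 %/ 2 = c' (mk 0).
    by rewrite prednK ?double_gt0 ?lt0n // -muln2 mulnK.
  move=> E; have := hadj' _ _ h0 h4; rewrite E eqxx; apply: imp_false; apply/eqP; lia.
move=> v; have hv : (v : nat) < 3 * k - 2 by rewrite -hn.
have -> : v = mk v by apply/val_inj; rewrite hmk.
rewrite hmk // /c0.
case: ifP => h1.
  case: (posnP v) => [h0|hpos].
    by rewrite h0 step4.
  case/boolP: (odd v) => ho; first exact: step3.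
  by apply: step2 => //; rewrite hpos.
by apply: step1; rewrite hv andbT leqNgt h1.
Qed.

Definition uniqc (V : finType) (p : V -> nat) (L : V -> seq nat) (c : V -> nat) :=
  L_coloring (fun u v => p u != p v) L c /\
  forall c', L_coloring (fun u v => p u != p v) L c' -> c' =1 c.

Definition Sb (V : finType) (L : V -> seq nat) := \sum_(v : V) sumn (L v).
Definition colf (V : finType) (L : V -> seq nat) (c : V -> nat) (v : V) : 'I_(Sb L).+1 :=
  inord (c v).
Definition Lsf (V : finType) (L : V -> seq nat) (v : V) : {set 'I_(Sb L).+1} :=
  [set y | val y \in L v].
Definition outf (V : finType) (L : V -> seq nat) (c : V -> nat) (x : 'I_(Sb L).+1) :=
  [set y | (y != x) && [forall v, (colf L c v == x) ==> (y \in Lsf L v)]].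
Definition Scf (V : finType) (L : V -> seq nat) (c : V -> nat) := [set colf L c v | v : V].
Definition Vxf (V : finType) (L : V -> seq nat) (c : V -> nat) (x : 'I_(Sb L).+1) :=
  [set v : V | colf L c v == x].

Arguments outf {V} L c x.
Arguments Vxf {V} L c x.
Arguments colf {V} L c v.
Arguments Lsf {V} L v.
Arguments Scf {V} L c.

Lemma mem_sumn (s : seq nat) y : y \in s -> y <= sumn s.
Proof.
elim: s => //= a s IH; rewrite in_cons => /orP[/eqP ->|/IH h]; first exact: leq_addr.
by apply: (leq_trans h); apply: leq_addl.
Qed.

Lemma mem_Sb (V : finType) (L : V -> seq nat) v y : y \in L v -> y <= Sb L.
Proof.
move=> /mem_sumn h; apply: (leq_trans h); rewrite /Sb (bigD1 v) //=; exact: leq_addr.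
Qed.

Lemma mem_Lsf (V : finType) (L : V -> seq nat) v (y : 'I_(Sb L).+1) :
  (y \in Lsf L v) = (val y \in L v).
Proof. by rewrite inE. Qed.

Lemma card_Lsf (V : finType) (L : V -> seq nat) v :
  uniq (L v) -> #|Lsf L v| = size (L v).
Proof.
move=> u; rewrite cardE; set e := enum _.
have ue : uniq (map val e) by rewrite map_inj_uniq ?enum_uniq //; exact: val_inj.
rewrite -(size_map val); apply: perm_size; apply: uniq_perm => // x.
apply/mapP/idP => [[y]|hx].
  by rewrite mem_enum mem_Lsf => h ->.
have hx' : x < (Sb L).+1 by rewrite ltnS; exact: mem_Sb hx.
exists (Ordinal hx') => //; by rewrite mem_enum mem_Lsf.
Qed.

Lemma colf_val (V : finType) (L : V -> seq nat) c v : c v \in L v -> val (colf L c v) = c v.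
Proof. by move=> h; apply: inordK; rewrite ltnS; exact: mem_Sb h. Qed.



Lemma inord_colf (V : finType) (L : V -> seq nat) c v (y : 'I_(Sb L).+1) :
  val y = c v -> y = colf L c v.
Proof. by rewrite /colf => <-; rewrite inord_val. Qed.

Lemma col_in_Ls (V : finType) (p : V -> nat) L c v :
  uniqc p L c -> colf L c v \in Lsf L v.
Proof. by move=> [[h1 _] _]; rewrite mem_Lsf colf_val. Qed.

Lemma col_part (V : finType) (p : V -> nat) L c u v :
  uniqc p L c -> colf L c u = colf L c v -> p u = p v.
Proof.
move=> [[h1 h2] _] e; apply/eqP; apply: contraLR isT => hp.
have := h2 _ _ hp; rewrite -(colf_val (h1 u)) -(colf_val (h1 v)) e eqxx //.
Qed.

Lemma F1 (V : finType) (p : V -> nat) L c v y :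
  uniqc p L c -> y \in Lsf L v -> y != colf L c v ->
  exists u, p u != p v /\ colf L c u = y.
Proof.
move=> hU hy hne.
case: (boolP [exists u, (p u != p v) && (colf L c u == y)]).
  by case/existsP => u /andP[h1 /eqP h2]; exists u.
move=> hno; exfalso.
have hno' : forall u, p u != p v -> colf L c u != y.
  move=> u hu; apply/negP => hc; move/negP: hno; apply; apply/existsP; exists u.
  by rewrite hu hc.
case: hU => [[h1 h2] hu].
pose c' := fun w => if w == v then val y else c w.
have : L_coloring (fun u v => p u != p v) L c'.
  split.
    by move=> w; rewrite /c'; case: eqP => [->|_]; [rewrite -mem_Lsf | exact: h1].
  move=> u w /= huw; rewrite /c'.
  case: (eqVneq u v) => [eu|nu]; case: (eqVneq w v) => [ew|nw].
  - by rewrite eu ew eqxx in huw.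
  - subst u; apply/eqP => e; move: (hno' w); rewrite eq_sym huw => /(_ isT).
    by rewrite (inord_colf e) eqxx.
  - subst w; apply/eqP => e; move: (hno' u huw).
    by rewrite (inord_colf (esym e)) eqxx.
  - exact: h2.
move/hu => /(_ v); rewrite /c' eqxx => e.
by move: hne; rewrite (inord_colf e) eqxx.
Qed.

Lemma out_sub (V : finType) (p : V -> nat) L c x :
  uniqc p L c -> x \in Scf L c -> outf L c x \subset Scf L c.
Proof.
move=> hU /imsetP[v _ ->]; apply/subsetP => y; rewrite inE => /andP[hne /forallP /(_ v)].
rewrite eqxx /= => hy.
have [u [_ <-]] := F1 hU hy hne.
by apply/imsetP; exists u.
Qed.

Lemma no_cycle (V : finType) (p : V -> nat) L c (A : {set 'I_(Sb L).+1}) g :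
  uniqc p L c ->
  (forall x, x \in A -> g x \in outf L c x) -> (forall x, x \in A -> g x \in A) ->
  {in A &, injective g} -> A \subset Scf L c -> A != set0 -> False.
Proof.
move=> hU hout hA hinj hAS hA0.
have [[h1 h2] hu] := hU.
pose c' := fun w => if colf L c w \in A then val (g (colf L c w)) else c w.
have : L_coloring (fun u v => p u != p v) L c'.
  split.
    move=> w; rewrite /c'; case: ifP => hw; last exact: h1.
    move: (hout _ hw); rewrite inE => /andP[_ /forallP /(_ w)].
    by rewrite eqxx /= mem_Lsf.
  move=> u w /= huw.
  have hcuw : colf L c u != colf L c w.
    by apply/eqP => e; move: huw; rewrite (col_part hU e) eqxx.
  rewrite /c'; case: ifP => hu'; case: ifP => hw'.
  - apply/eqP => e; move/val_inj: e => /(hinj _ _ hu' hw') e.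
    by rewrite e eqxx in hcuw.
  - apply/eqP => e; move: hw'; rewrite -(inord_colf e).
    by rewrite hA.
  - apply/eqP => e; move: hu'; rewrite -(inord_colf (esym e)).
    by rewrite hA.
  - exact: h2.
move/hu => hc'.
case/set0Pn: hA0 => x hx.
have := subsetP hAS _ hx; case/imsetP => v _ ex.
have := hc' v; rewrite /c' -ex hx => e.
move: (hout _ hx); rewrite inE => /andP[]; rewrite (inord_colf e) -ex eqxx //.
Qed.

Lemma cyc (T : finType) (R : {set T}) (g : T -> T) :
  R != set0 -> (forall x, x \in R -> g x \in R) ->
  exists A : {set T}, [/\ A != set0, A \subset R,
    (forall x, x \in A -> g x \in A) & {in A &, injective g}].
Proof.
move=> hR hg.
pose P := fun A : {set T} => [&& A != set0, A \subset R & [forall x in A, g x \in A]].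
have PR : P R by rewrite /P hR subxx /=; apply/forall_inP.
case: (arg_minnP (fun A : {set T} => #|A|) PR) => A /and3P[hA0 hAR /forall_inP hAc] hmin.
exists A; split => //.
pose B := [set g x | x in A].
have hBA : B \subset A by apply/subsetP => y /imsetP[x hx ->]; exact: hAc.
have PB : P B.
  rewrite /P (subset_trans hBA hAR) /=; apply/andP; split.
    case/set0Pn: hA0 => x hx; apply/set0Pn; exists (g x); exact: imset_f.
  by apply/forall_inP => x hx; apply: imset_f; exact: (subsetP hBA).
have h1 := hmin _ PB.
have h2 : #|B| <= #|A| := leq_imset_card g A.
apply/imset_injP; rewrite eqn_leq h2 h1 //.
Qed.

Lemma Tlem (V : finType) (p : V -> nat) L c t :
  uniqc p L c ->
  #|[set x in Scf L c | #|outf L c x| <= t]| <= t ->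
  Scf L c \subset [set x in Scf L c | #|outf L c x| <= t].
Proof.
move=> hU hW; apply/subsetP => x0 hx0; apply/negPn/negP => hn; exfalso.
set W := [set x in Scf L c | #|outf L c x| <= t] in hW hn.
pose R := Scf L c :\: W.
have hx0R : x0 \in R by rewrite inE hn hx0.
have key : forall x, x \in R -> exists y, y \in outf L c x :\: W.
  move=> x; rewrite inE => /andP[hxW hxS].
  case: (boolP (outf L c x :\: W == set0)) => [/eqP e | /set0Pn [y hy]]; last by exists y.
  exfalso.
  have hsub : outf L c x \subset W.
    apply/subsetP => y hy; apply/negPn/negP => hyW.
    have : y \in outf L c x :\: W by rewrite inE hyW hy.
    by rewrite e inE.
  move: hxW; rewrite inE hxS /= -ltnNge => hlt.
  have h := subset_leq_card hsub.
  by rewrite ltnNge (leq_trans h hW) in hlt.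
pose g := fun x => if x \in R then odflt x [pick y in outf L c x :\: W] else x.
have hg : forall x, x \in R -> g x \in outf L c x :\: W.
  move=> x hx; rewrite /g hx; case: pickP => [y hy //|].
  by move=> h; have [y hy] := key x hx; move: (h y); rewrite hy.
have hgR : forall x, x \in R -> g x \in R.
  move=> x hx; have := hg x hx; rewrite inE => /andP[h1 h2].
  rewrite inE h1 /=; apply: (subsetP (out_sub hU _)) h2.
  by move: hx; rewrite inE => /andP[].
have hR0 : R != set0 by apply/set0Pn; exists x0.
have [A [hA0 hAR hAc hinj]] := cyc hR0 hgR.
apply: (no_cycle hU (A := A) (g := g)) => //.
- by move=> x hx; have := hg x (subsetP hAR _ hx); rewrite inE => /andP[].
- by apply: (subset_trans hAR); apply: subsetDl.
Qed.

Lemma card_sep (T : finType) (B : {set T}) (P : pred T) :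
  #|[set x in B | P x]| = \sum_(x in B) (P x : nat).
Proof.
rewrite -sum1dep_card big_mkcondr; apply: eq_bigr => x _; by case: (P x).
Qed.

Lemma single_out (V : finType) (p : V -> nat) L c K x :
  k_list_assignment K L -> uniqc p L c -> #|Vxf L c x| = 1 -> K.-1 <= #|outf L c x|.
Proof.
move=> hK hU /eqP /cards1P [v hv].
have hvx : colf L c v = x.
  have : v \in Vxf L c x by rewrite hv set11.
  by rewrite inE => /eqP.
have sub : Lsf L v :\ x \subset outf L c x.
  apply/subsetP => y; rewrite !inE => /andP[hyx hy]; rewrite hyx /=.
  apply/forallP => w; apply/implyP => hw.
  have : w \in Vxf L c x by rewrite inE hw.
  by rewrite hv => /set1P ->; rewrite mem_Lsf.
have hc : #|Lsf L v| = K by rewrite card_Lsf; case: (hK v).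
have := cardsD1 x (Lsf L v); rewrite -hvx (col_in_Ls v hU) hc hvx => e.
have := subset_leq_card sub; by rewrite e.
Qed.

Lemma pair_out (V : finType) (p : V -> nat) L c K x u w (U : {set 'I_(Sb L).+1}) :
  k_list_assignment K L -> uniqc p L c -> Vxf L c x \subset [set u; w] ->
  colf L c u = x -> colf L c w = x ->
  Lsf L u :\ x \subset U -> Lsf L w :\ x \subset U ->
  (K.-1).*2 <= #|outf L c x| + #|U|.
Proof.
move=> hK hU hsub hu hw hsu hsw.
have sub : (Lsf L u :\ x) :&: (Lsf L w :\ x) \subset outf L c x.
  apply/subsetP => y; rewrite !inE => /andP[/andP[hyx hy1] /andP[_ hy2]]; rewrite hyx /=.
  apply/forallP => v; apply/implyP => hv.
  have : v \in Vxf L c x by rewrite inE hv.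
  by move/(subsetP hsub); rewrite !inE => /orP[] /eqP ->.
have card1 : forall z, colf L c z = x -> #|Lsf L z :\ x| = K.-1.
  move=> z hz; have hc : #|Lsf L z| = K by rewrite card_Lsf; case: (hK z).
  by have := cardsD1 x (Lsf L z); rewrite -{1}hz (col_in_Ls z hU) hc => ->.
have hUI := cardsUI (Lsf L u :\ x) (Lsf L w :\ x).
rewrite (card1 _ hu) (card1 _ hw) addnn in hUI.
have h1 := subset_leq_card sub.
have h2 : #|(Lsf L u :\ x) :|: (Lsf L w :\ x)| <= #|U|.
  by apply: subset_leq_card; rewrite subUset hsu hsw.
rewrite -hUI; move: h1 h2.
set a := #|_ :|: _|; set b := #|_ :&: _|; set o := #|outf L c x|; set m := #|U|.
lia.
Qed.

Lemma alt_sub (V : finType) (p : V -> nat) L c u :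
  uniqc p L c ->
  Lsf L u :\ colf L c u \subset [set colf L c w | w in [set w | p w != p u]].
Proof.
move=> hU; apply/subsetP => y; rewrite !inE => /andP[hne hy].
have hy' : y \in Lsf L u by rewrite mem_Lsf.
have [w [hw <-]] := F1 hU hy' hne.
by apply: imset_f; rewrite inE.
Qed.

Lemma count_colors (V : finType) (p : V -> nat) L c (U : {set V}) :
  uniqc p L c ->
  (forall v w, v \in U -> colf L c w = colf L c v -> w \in U) ->
  #|[set colf L c v | v in U]| + #|[set x in [set colf L c v | v in U] | 2 <= #|Vxf L c x|]|
   + #|[set x in [set colf L c v | v in U] | 3 <= #|Vxf L c x|]| <= #|U|.
Proof.
move=> hU hcl.
set B := [set colf L c v | v in U].
rewrite !card_sep -sum1_card -!big_split /=.
rewrite -sum1_card (partition_big_imset (colf L c)) /=.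
apply: leq_sum => x hx.
have -> : \sum_(i in U | colf L c i == x) 1 = #|Vxf L c x|.
  rewrite -sum1_card; apply: eq_bigl => v; rewrite inE.
  case/imsetP: hx => v0 hv0 ->.
  case: (eqVneq (colf L c v) (colf L c v0)) => [e|]; last by rewrite andbF.
  by rewrite (hcl _ _ hv0 e).
have : 0 < #|Vxf L c x|.
  case/imsetP: hx => v0 hv0 ->; apply/card_gt0P; exists v0; by rewrite inE.
set m := #|Vxf L c x|; case: m => [|[|[|m]]] //.
Qed.

Lemma card_range n (A : {set 'I_n}) lo hi :
  (forall v : 'I_n, v \in A -> lo <= (v : nat) < hi) -> #|A| <= hi - lo.
Proof.
move=> h.
have hs : {subset map (@nat_of_ord n) (enum A) <= iota lo (hi - lo)}.
  move=> x /mapP[v]; rewrite mem_enum => /h hv ->; rewrite mem_iota; lia.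
have hu : uniq (map (@nat_of_ord n) (enum A)) by rewrite map_inj_uniq ?enum_uniq //; exact: ord_inj.
by have := uniq_leq_size hu hs; rewrite size_map size_iota -cardE.
Qed.

Lemma gt1 m : m != 1 -> 0 < m -> 1 < m.
Proof. by case: m => [|[|m]]. Qed.

Lemma gt2 m : m != 1 -> 0 < m -> m != 2 -> 2 < m.
Proof. by case: m => [|[|[|m]]]. Qed.

Lemma K_notU k : 2 <= k -> property_M (cm_adj (K_sizes k)) (k + 1).
Proof.
move=> hk [L [hK [c [hc hu]]]].
set V := 'I_(sumn (K_sizes k)) in L c hK hc hu.
pose p := fun v : V => part_of (K_sizes k) v.
have hU : uniqc p L c by split.
clear hc hu.
have hn : sumn (K_sizes k) = 3 * k - 2 by apply: sumn_K; lia.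
have hp : forall v : V, p v = minn k (v.+1 %/ 2).
  by move=> v; apply: part_of_K; [lia | rewrite -hn].
have v0 : V by exists 0; rewrite hn; lia.
pose mk (i : nat) : V := insubd v0 i.
have hmk : forall i, i < 3 * k - 2 -> (mk i : nat) = i.
  move=> i hi; have hi' : i < sumn (K_sizes k) by rewrite hn.
  by rewrite val_insubd hi'.
have hvlt : forall v : V, (v : nat) < 3 * k - 2 by move=> v; rewrite -hn; exact: ltn_ord.
pose a := mk 0.
pose cv := mk (2 * k - 1).
have hpa : p a = 0 by rewrite hp hmk //; lia.
have hpcv : p cv = k by rewrite hp hmk; lia.
have hple : forall v, p v <= k by move=> v; rewrite hp geq_minl.
have hp0 : forall v, p v = 0 -> v = a.
  move=> v; rewrite hp => h; apply: ord_inj; rewrite hmk; last lia.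
  have := hvlt v; move: h; set w := nat_of_ord v; lia.
pose col := colf L c.
have colp : forall u v, col u = col v -> p u = p v.
  by move=> u v e; apply: (col_part hU e).
pose VB := [set v : V | 0 < p v < k].
pose VC := [set v : V | p v == k].
pose SB := [set col v | v in VB].
pose SC := [set col v | v in VC].
pose Sc := Scf L c.
pose Vx := Vxf L c.
pose out := outf L c.
pose MB := [set x in SB | 2 <= #|Vx x|].
pose MC := [set x in SC | 2 <= #|Vx x|].
pose C3 := [set x in SC | 3 <= #|Vx x|].
have hVB : #|VB| <= 2 * k - 2.
  have := @card_range _ VB 1 (2 * k - 1); rewrite (_ : 2 * k - 1 - 1 = 2 * k - 2); last lia.
  apply=> v; rewrite inE hp => h; have := hvlt v; move: h; set w := nat_of_ord v; lia.
have hVC : #|VC| <= k - 1.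
  have := @card_range _ VC (2 * k - 1) (3 * k - 2); rewrite (_ : 3 * k - 2 - (2 * k - 1) = k - 1); last lia.
  apply=> v; rewrite inE hp => h; have := hvlt v; move: h; set w := nat_of_ord v; lia.
have hcolB : forall v w, v \in VB -> col w = col v -> w \in VB.
  by move=> v w; rewrite !inE => h e; rewrite (colp _ _ e).
have hcolC : forall v w, v \in VC -> col w = col v -> w \in VC.
  by move=> v w; rewrite !inE => h e; rewrite (colp _ _ e).
have ccB : #|SB| + #|MB| <= 2 * k - 2.
  have h := count_colors hU hcolB.
  have h' : #|SB| + #|MB| <= #|VB| := leq_trans (leq_addr _ _) h.
  exact: leq_trans h' hVB.
have ccC : #|SC| + #|MC| + #|C3| <= k - 1.
  have h := count_colors hU hcolC.
  have h' : #|SC| + #|MC| + #|C3| <= #|VC| := h.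
  exact: leq_trans h' hVC.
have cls : forall v, [\/ v = a, v \in VB | v \in VC].
  move=> v; have := hple v; have := hp0 v; rewrite !inE.
  case: (p v) => [|j] h1 h2; first by apply: Or31; apply: h1.
  case: (ltnP j.+1 k) => h3; first by apply: Or32.
  by apply: Or33; apply/eqP; lia.
have hMBle : #|MB| <= #|SB|.
  by apply: subset_leq_card; apply/subsetP => x; rewrite inE => /andP[].
have hSC1 : 0 < #|SC|.
  by apply/card_gt0P; exists (col cv); apply: imset_f; rewrite inE hpcv.
have hS : #|Sc| <= 1 + #|SB| + #|SC|.
  have sub : Sc \subset col a |: (SB :|: SC).
    apply/subsetP => x /imsetP[v _ ->]; rewrite !inE.
    case: (cls v) => [->|hv|hv]; first by rewrite eqxx.
      by rewrite (imset_f col hv) orbT.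
    by rewrite (imset_f col hv) !orbT.
  have := subset_leq_card sub; rewrite cardsU1.
  have := cardsUI SB SC; set u1 := #|SB :|: SC|; set u2 := #|SB :&: SC|.
  set b := #|SB|; set cc := #|SC|; set ss := #|Sc|.
  case: (col a \notin SB :|: SC); lia.
have hVx1 : forall x, x \in Sc -> 0 < #|Vx x|.
  by move=> x /imsetP[v _ ->]; apply/card_gt0P; exists v; rewrite inE.
have hsingle : forall x, #|Vx x| = 1 -> k <= #|out x|.
  by move=> x h; have := single_out hK hU h; rewrite addn1.
have hVa : #|Vx (col a)| = 1.
  have -> : Vx (col a) = [set a].
    apply/setP => w; rewrite !inE; apply/eqP/eqP => [e|->] //.
    by apply: hp0; rewrite (colp _ _ e).
  exact: cards1.
have outa : k <= #|out (col a)| by exact: hsingle.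
have haS : col a \in Sc by apply: imset_f.
have pairB : forall x, x \in SB -> 2 <= #|Vx x| -> 2 * k <= #|out x| + (#|Sc| - 1).
  move=> x /imsetP[v hv ->] h2.
  move: hv; rewrite inE => /andP[hj1 hj2].
  set j := p v in hj1 hj2.
  pose u0 := mk (j.*2 - 1); pose u1 := mk j.*2.
  have hu0 : (u0 : nat) = j.*2 - 1 by rewrite hmk; lia.
  have hu1 : (u1 : nat) = j.*2 by rewrite hmk; lia.
  have hsub : Vx (col v) \subset [set u0; u1].
    apply/subsetP => w; rewrite !inE => /eqP e.
    have := colp _ _ e; rewrite -/j hp => hw.
    have := hvlt w; move: hw; rewrite -!(inj_eq (@ord_inj _)) hu0 hu1.
    set ww := nat_of_ord w => hw hw2.
    have : ww = j.*2 - 1 \/ ww = j.*2 by lia.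
    by case=> ->; rewrite eqxx ?orbT.
  have hVeq : Vx (col v) = [set u0; u1].
    apply/eqP; rewrite eqEcard hsub /= cards2.
    by apply: leq_trans h2; case: (u0 != u1).
  have hu0V : u0 \in Vx (col v) by rewrite hVeq !inE eqxx.
  have hu1V : u1 \in Vx (col v) by rewrite hVeq !inE eqxx orbT.
  move: hu0V hu1V; rewrite !inE => /eqP e0 /eqP e1.
  have hsubU : forall z, col z = col v -> Lsf L z :\ col v \subset Sc :\ col v.
    move=> z ez; apply/subsetP => y hy; rewrite inE.
    move: (hy); rewrite !inE => /andP[hne _]; rewrite hne /=.
    have := subsetP (alt_sub z hU) y; rewrite -/col ez => /(_ hy) /imsetP[w _ ->].
    exact: imset_f.
  have := pair_out hK hU hsub e0 e1 (hsubU _ e0) (hsubU _ e1).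
  have hcS : col v \in Sc by apply: imset_f.
  rewrite (cardsD1 (col v) Sc) hcS addn1 /= -/out.
  set o := #|out (col v)|; set r := #|Sc :\ col v|; lia.
have pairC : forall x, x \in SC -> #|Vx x| = 2 -> 2 * k <= #|out x| + (1 + #|SB|).
  move=> x /imsetP[v hv ->] /eqP /cards2P [u [w [hne hVeq]]].
  have hpv : p v = k by move: hv; rewrite inE => /eqP.
  have : u \in Vx (col v) by rewrite hVeq !inE eqxx.
  have : w \in Vx (col v) by rewrite hVeq !inE eqxx orbT.
  rewrite !inE => /eqP ew /eqP eu.
  have hsubU : forall z, col z = col v -> Lsf L z :\ col v \subset col a |: SB.
    move=> z ez; apply/subsetP => y hy.
    have := subsetP (alt_sub z hU) y; rewrite -/col ez => /(_ hy) /imsetP[w' hw' ->].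
    move: hw'; rewrite inE (colp _ _ ez) hpv => hw'.
    rewrite !inE; case: (cls w') => [->|h|h]; first by rewrite eqxx.
      by rewrite (imset_f col h) orbT.
    by move: h hw'; rewrite inE => /eqP ->; rewrite eqxx.
  have hsub : Vx (col v) \subset [set u; w] by rewrite hVeq.
  have := pair_out hK hU hsub eu ew (hsubU _ eu) (hsubU _ ew).
  rewrite cardsU1 addn1 /= -/out.
  set o := #|out (col v)|; set b := #|SB|; case: (col a \notin SB) => /=; lia.
have hW1 : k <= #|MB| + #|MC|.
  set W := [set x in Sc | #|out x| <= k - 1].
  have hW : k <= #|W|.
    rewrite leqNgt; apply/negP => h.
    have hWle : #|W| <= k - 1 by lia.
    have := Tlem hU hWle => /subsetP /(_ _ haS).
    by rewrite inE haS /= => h'; have := leq_trans outa h'; lia.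
  have sub : W \subset MB :|: MC.
    apply/subsetP => x; rewrite inE => /andP[hx ho].
    have h1 : #|Vx x| != 1 by apply/eqP => /hsingle; lia.
    have h2 := hVx1 _ hx.
    move: (hx) => /imsetP[v _ ev]; rewrite !inE.
    case: (cls v) => [ea|hv|hv].
    - by move: h1; rewrite ev ea; move: hVa => /eqP ->.
    - have hxB : x \in SB by rewrite ev; exact: imset_f.
      by rewrite hxB /=; apply/orP; left; apply: gt1.
    - have hxC : x \in SC by rewrite ev; exact: imset_f.
      by rewrite hxC /=; apply/orP; right; apply: gt1.
  have := subset_leq_card sub; have := cardsUI MB MC.
  set u1 := #|MB :|: MC|; set u2 := #|MB :&: MC|; set w1 := #|W|; lia.
have hmain : 2 + #|MB| <= #|C3| + #|SC|.
  rewrite leqNgt; apply/negP => hlt.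
  set t2 := 1 + #|MB| - #|SC|.
  set W := [set x in Sc | #|out x| <= t2].
  have ht2k : t2 < k by rewrite /t2; lia.
  have sub : W \subset C3.
    apply/subsetP => x; rewrite inE => /andP[hx ho].
    have h1 : #|Vx x| != 1 by apply/eqP => /hsingle; lia.
    have h2 := hVx1 _ hx.
    move: (hx) => /imsetP[v _ ev].
    case: (cls v) => [ea|hv|hv].
    - by move: h1; rewrite ev ea; move: hVa => /eqP ->.
    - have hxB : x \in SB by rewrite ev; exact: imset_f.
      have := pairB x hxB (gt1 h1 h2); move: ho; rewrite /t2.
      set o := #|out x|; lia.
    - have hxC : x \in SC by rewrite ev; exact: imset_f.
      rewrite inE hxC /=.
      case: (eqVneq #|Vx x| 2) => [e2|n2]; last exact: gt2.
      have := pairC x hxC e2; move: ho; rewrite /t2.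
      set o := #|out x|; lia.
  have hWle : #|W| <= t2.
    apply: (leq_trans (subset_leq_card sub)); rewrite /t2; lia.
  have := Tlem hU hWle => /subsetP /(_ _ haS).
  by rewrite inE haS /= => h'; have := leq_trans outa h'; lia.
lia.
Qed.

Unset Implicit Arguments.

Theorem mainTheorem16 (k : nat) (hk : 2 <= k) :
  m_number_is (cm_adj (K_sizes k)) (k + 1).
Proof.
split; first by rewrite addn1.
split; first exact: K_notU.
move=> j hj hjk hM; apply: hM.
apply: (UkLC_downto (k := k)) => //; last exact: K_UkLC.
by rewrite addn1 ltnS in hjk.
Qed.
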